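(* In the setting of the context, suppose $G_{xy}^{[1]}=1$ and $G_x\cong\mathrm{Frob}(20)\times C_2$. Then $G_e\cong\mathrm{M}_{16}$ or $G_e\cong\mathrm{N}_{16}$.
   Context: $\mathcal{A}=(G_x,G_e,G_{xy})$ is a finite, primitive amalgam of degree $(5,2)$ (no nontrivial subgroup of $G_{xy}$ normal in both $G_x$ and $G_e$; $|G_x:G_{xy}|=5$, $|G_e:G_{xy}|=2$), $G=G_x*_{G_{xy}}G_e$ acts on the coset graph (5-valent tree) $\Gamma$, $x$ is the vertex with stabiliser $G_x$, $y$ the neighbour with $G_e$ the setwise stabiliser of $\{x,y\}$ and $G_x\cap G_y=G_{xy}$. $G_z^{[1]}$ is the pointwise stabiliser of $z$ and its neighbours, $G_{xy}^{[1]}=G_x^{[1]}\cap G_y^{[1]}$. $\mathrm{Frob}(20)$ is the Frobenius group of order 20. $\mathrm{M}_{16}=\langle u,v\mid u^8=v^2=1,\ u^v=u^5\rangle$, and $\mathrm{N}_{16}=\langle (1,2,3,4)(5,6,7,8),(5,7)(6,8),(1,5)(2,6)(3,7)(4,8)\rangle\le S_8$. *)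

(* Defs.v *)
From HB Require Import structures.
From mathcomp Require Import all_boot all_order all_fingroup all_solvable.
Set Implicit Arguments. Unset Strict Implicit. Unset Printing Implicit Defensive.
Local Open Scope group_scope.

(* lperm n s : the permutation of {0,..,n} sending i to the i-th entry of s
   (s must be a permutation of [0..n]; otherwise it is the identity). *)
Definition lperm_ok n (s : seq nat) :=
  [&& uniq s, size s == n.+1 & all (fun k => k < n.+1) s].

Definition lperm_fun n (s : seq nat) (i : 'I_n.+1) : 'I_n.+1 :=
  if lperm_ok n s then inord (nth 0 s i) else i.

Lemma lperm_inj n s : injective (@lperm_fun n s).
Proof.
move=> i j; rewrite /lperm_fun /lperm_ok; case: ifP => [/and3P[Hu /eqP Hs /allP Ha]|_ //].
have Hi : forall k : 'I_n.+1, nth 0 s k < n.+1.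
  by move=> k; apply: Ha; apply: mem_nth; rewrite Hs.
move/(congr1 (@nat_of_ord _)); rewrite !inordK ?Hi //.
by move/eqP; rewrite nth_uniq ?Hs // => /eqP/val_inj.
Qed.

Definition lperm n s : 'S_n.+1 := perm (@lperm_inj n s).

(* Frob(20) = AGL(1,5) acting on {0,..,4}: generated by x |-> x+1 and x |-> 2x. *)
Definition frob_a : 'S_5 := lperm 4 [:: 1; 2; 3; 4; 0]%N.
Definition frob_b : 'S_5 := lperm 4 [:: 0; 2; 4; 1; 3]%N.
Definition Frob20 : {group 'S_5} := <<[set frob_a; frob_b]>>%G.
Definition C2 : {group 'S_2} := [set: 'S_2]%G.
Definition Frob20xC2 : {group ('S_5 * 'S_2)%type} := setX_group Frob20 C2.

(* ---------- N_16 <= S_8 (points 1..8 of the paper are 0..7 here) ---------- *)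
(* (1,2,3,4)(5,6,7,8) *)
Definition N16_a : 'S_8 := lperm 7 [:: 1; 2; 3; 0; 5; 6; 7; 4]%N.
(* (5,7)(6,8) *)
Definition N16_b : 'S_8 := lperm 7 [:: 0; 1; 2; 3; 6; 7; 4; 5]%N.
(* (1,5)(2,6)(3,7)(4,8) *)
Definition N16_c : 'S_8 := lperm 7 [:: 4; 5; 6; 7; 0; 1; 2; 3]%N.
Definition N16 : {group 'S_8} := <<[set N16_a; N16_b; N16_c]>>%G.

(* G_x^{[1]}: kernel of the action of G_x on the neighbours of x, i.e. on the
   cosets G_x / G_xy : the core of G_xy in G_x. *)
Definition vertex_kernel (gT : finGroupType) (Gx Gxy : {set gT}) : {set gT} :=
  gcore Gxy Gx.

(* G_xy^{[1]} = G_x^{[1]} :&: G_y^{[1]}, where G_y = G_x :^ t for an element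
   t of G_e \ G_xy (the edge flip), hence G_y^{[1]} = (G_x^{[1]}) :^ t. *)
Definition edge_kernel (gT : finGroupType) (Gx Ge Gxy : {set gT}) : {set gT} :=
  vertex_kernel Gx Gxy :&: vertex_kernel Gx Gxy :^ repr (Ge :\: Gxy).

Definition primitive_amalgam (gT : finGroupType) (Gx Ge Gxy : {group gT}) :=
  forall H : {group gT}, H \subset Gxy -> H <| Gx -> H <| Ge -> H :=: 1.

Definition amalgam52 (gT : finGroupType) (Gx Ge Gxy : {group gT}) :=
  [/\ Gxy \subset Gx, Gxy \subset Ge, Gx :&: Ge = Gxy,
      #|Gx : Gxy| = 5 & #|Ge : Gxy| = 2].

(* Main.v *)
Require Import Defs.
From HB Require Import structures.
From mathcomp Require Import all_boot all_order all_fingroup all_solvable.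
Local Open Scope group_scope.
Set Warnings "-notation-overridden".
Set Implicit Arguments. Unset Strict Implicit. Unset Printing Implicit Defensive.


Definition ee (gT : finGroupType) (a z : gT) (i j : nat) := a ^+ i * z ^+ j.

Lemma eeM (gT : finGroupType) (a z : gT) i j k l : commute a z ->
  ee a z i j * ee a z k l = ee a z (i + k) (j + l).
Proof.
move=> c; rewrite /ee mulgA -(mulgA (a ^+ i)) (commuteX2 j k (commute_sym c)).
by rewrite mulgA -expgD -mulgA -expgD.
Qed.

Lemma eeX (gT : finGroupType) (a z : gT) i j n : commute a z ->
  (ee a z i j) ^+ n = ee a z (i * n) (j * n).
Proof.
move=> c; elim: n => [|n IH]; first by rewrite !muln0 expg0 /ee !expg0 mulg1.
by rewrite expgSr IH eeM // !mulnS (addnC i) (addnC j).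
Qed.

Lemma eemod (gT : finGroupType) (a z : gT) i j : #[a] = 4%N -> #[z] = 2%N ->
  ee a z i j = ee a z (i %% 4) (j %% 2).
Proof. by move=> oa oz; rewrite /ee -{1}(expg_mod_order a i) -{1}(expg_mod_order z j) oa oz. Qed.

Lemma TIaz (gT : finGroupType) (a z : gT) : #[z] = 2%N -> z \notin <[a]> ->
  <[a]> :&: <[z]> = 1.
Proof.
move=> oz nz; rewrite setIC prime_TIg //; first by rewrite -orderE oz.
by rewrite cycle_subG.
Qed.

Lemma ee_eq (gT : finGroupType) (a z : gT) i j k l : #[a] = 4%N -> #[z] = 2%N ->
  z \notin <[a]> -> ee a z i j = ee a z k l -> i %% 4 = k %% 4 /\ j %% 2 = l %% 2.
Proof.
move=> oa oz nz E.
have E2 : (a ^+ k)^-1 * a ^+ i = z ^+ l * (z ^+ j)^-1.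
  have := congr1 (fun x => (a ^+ k)^-1 * x * (z ^+ j)^-1) E; rewrite /= /ee.
  by rewrite !mulgA mulgK mulVg mul1g.
have : (a ^+ k)^-1 * a ^+ i \in <[a]> :&: <[z]>.
  by rewrite inE {2}E2 !groupM ?groupV ?mem_cycle.
rewrite TIaz // inE => /eqP E3.
move: E2; rewrite E3 => /esym E4.
have Ha : a ^+ i = a ^+ k by apply/(mulgI (a ^+ k)^-1); rewrite E3 mulVg.
have Hz : z ^+ l = z ^+ j by apply/(mulIg (z ^+ j)^-1); rewrite E4 mulgV.
move/eqP: Ha; rewrite eq_expg_mod_order oa => /eqP ->.
by move/eqP: Hz; rewrite eq_expg_mod_order oz => /eqP ->.
Qed.

Lemma ee_mem (gT : finGroupType) (a z x : gT) : #[a] = 4%N -> #[z] = 2%N ->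
  x \in <[a]> * <[z]> -> exists i j, [/\ i < 4, j < 2 & x = ee a z i j]%N.
Proof.
move=> oa oz /mulsgP[y w /cycleP[i ->] /cycleP[j ->] ->].
by exists (i %% 4)%N, (j %% 2)%N; rewrite !ltn_pmod // -eemod.
Qed.

Lemma ee_neq (gT : finGroupType) (a z : gT) i j k l : #[a] = 4%N -> #[z] = 2%N ->
  ee a z i j != ee a z k l -> ~~ ((i %% 4 == k %% 4) && (j %% 2 == l %% 2))%N.
Proof.
move=> oa oz; apply: contra => /andP[/eqP e1 /eqP e2].
by apply/eqP; rewrite [LHS]eemod // e1 e2 -eemod.
Qed.

Lemma ee_eqb (gT : finGroupType) (a z : gT) i j k l : #[a] = 4%N -> #[z] = 2%N ->
  z \notin <[a]> -> ee a z i j = ee a z k l -> ((i %% 4 == k %% 4) && (j %% 2 == l %% 2))%N.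
Proof. by move=> oa oz nz /ee_eq[] // -> ->; rewrite !eqxx. Qed.

Lemma brute1 (i1 j1 i2 j2 : nat) : (i1 < 4 -> j1 < 2 -> i2 < 4 -> j2 < 2 ->
  ~~ (((i1 * 2) %% 4 == 0) && ((j1 * 2) %% 2 == 0)) ->
  (((i2 * 2) %% 4 == 0) && ((j2 * 2) %% 2 == 0)) ->
  ~~ ((i2 %% 4 == 0) && (j2 %% 2 == 1)) ->
  ~~ ((i2 %% 4 == 0) && (j2 %% 2 == 0)) ->
  ~~ ((i2 %% 4 == (i1 * 2) %% 4) && (j2 %% 2 == (j1 * 2) %% 2)) ->
  (((i1 * i1 + i2 * j1) %% 4 == 1) && ((j1 * i1 + j2 * j1) %% 2 == 0)) ->
  [&& (i1 == 1) || (i1 == 3), j1 == 0, i2 == 2 & j2 == 1])%N.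
Proof.
by case: i1 => [|[|[|[|i1]]]] //; case: j1 => [|[|j1]] //;
   case: i2 => [|[|[|[|i2]]]] //; case: j2 => [|[|j2]].
Qed.



Lemma order_pow2 (gT : finGroupType) (x : gT) n : x ^+ (2 ^ n.+1) = 1 -> x ^+ (2 ^ n) != 1 -> #[x] = (2 ^ n.+1)%N.
Proof.
move=> h1 h2; have /(dvdn_pfactor _ _ (isT : prime 2)) [m lem em]: (#[x] %| 2 ^ n.+1)%N by rewrite order_dvdn h1.
move: h2; rewrite -order_dvdn em; case: (ltngtP m n.+1) lem => // [lt _|-> //].
by rewrite dvdn_exp2l // -ltnS.
Qed.

Lemma order4 (gT : finGroupType) (x : gT) : x ^+ 4 = 1 -> x ^+ 2 != 1 -> #[x] = 4%N.
Proof. exact: (@order_pow2 _ x 1). Qed.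

Lemma a2neq (gT : finGroupType) (a : gT) : #[a] = 4%N -> a ^+ 2 != 1.
Proof. by move=> oa; rewrite -order_dvdn oa. Qed.

Lemma ee00 (gT : finGroupType) (a z : gT) : ee a z 0 0 = 1.
Proof. by rewrite /ee !expg0 mulg1. Qed.
Lemma ee10 (gT : finGroupType) (a z : gT) : ee a z 1 0 = a.
Proof. by rewrite /ee expg1 expg0 mulg1. Qed.
Lemma ee01 (gT : finGroupType) (a z : gT) : ee a z 0 1 = z.
Proof. by rewrite /ee expg1 expg0 mul1g. Qed.
Lemma ee11 (gT : finGroupType) (a z : gT) : ee a z 1 1 = a * z.
Proof. by rewrite /ee !expg1. Qed.

Lemma joinE (gT : finGroupType) (a z : gT) : commute a z -> <[a]> <*> <[z]> = <[a]> * <[z]>.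
Proof. move=> c; rewrite cent_joinEr // cycle_subG; apply/centP => _ /cycleP[k ->]; apply: commuteX; exact: commute_sym. Qed.

Lemma cardH (gT : finGroupType) (a z : gT) : #[a] = 4%N -> #[z] = 2%N -> z \notin <[a]> ->
  #|<[a]> * <[z]>| = 8%N.
Proof. by move=> oa oz nz; rewrite TI_cardMg ?TIaz // -!orderE oa oz. Qed.

Lemma reduce (gT : finGroupType) (a z t : gT) : #[a] = 4%N -> #[z] = 2%N -> commute a z ->
  z \notin <[a]> ->
  (forall x, x \in <[a]> * <[z]> -> x ^ t \in <[a]> * <[z]>) ->
  t ^+ 2 \in <[a]> * <[z]> -> z ^ t != z ->
  exists A, [/\ #[A] = 4%N, commute A z, z \notin <[A]>, <[A]> * <[z]> = <[a]> * <[z]> &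
   (A ^ t = A /\ z ^ t = A ^+ 2 * z)].
Proof.
move=> oa oz c nz Ht t2H nzt.
have aH : a \in <[a]> * <[z]> by have := mem_mulg (cycle_id a) (group1 <[z]>); rewrite mulg1.
have zH : z \in <[a]> * <[z]> by have := mem_mulg (group1 <[a]>) (cycle_id z); rewrite mul1g.
have cH x y : x \in <[a]> * <[z]> -> y \in <[a]> * <[z]> -> commute x y.
  move=> /(ee_mem oa oz)[i [j [_ _ ->]]] /(ee_mem oa oz)[k [l [_ _ ->]]].
  by rewrite /commute !eeM // addnC (addnC j).
have [i1 [j1 [l1 m1 E1]]] := ee_mem oa oz (Ht _ aH).
have [i2 [j2 [l2 m2 E2]]] := ee_mem oa oz (Ht _ zH).
have z1 : z ^+ 2 = 1 by rewrite -oz expg_order.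
have h1 : ee a z (i1 * 2) (j1 * 2) != ee a z 0 0.
  by rewrite ee00 -eeX // -E1 -conjXg conjg_eq1 a2neq.
have h2 : ee a z (i2 * 2) (j2 * 2) = ee a z 0 0.
  by rewrite ee00 -eeX // -E2 -conjXg z1 conj1g.
have h3 : ee a z i2 j2 != ee a z 0 1.
  by rewrite ee01 -E2.
have h4 : ee a z i2 j2 != ee a z 0 0.
  by rewrite ee00 -E2 conjg_eq1 -order_gt1 oz.
have h5 : ee a z i2 j2 != ee a z (i1 * 2) (j1 * 2).
  rewrite -eeX // -E1 -E2 -conjXg; apply/eqP => /conjg_inj ez.
  by move: nz; rewrite ez mem_cycle.
have h6 : ee a z (i1 * i1 + i2 * j1) (j1 * i1 + j2 * j1) = ee a z 1 0.
  rewrite -eeM // -!eeX // -E1 -E2 -!conjXg -conjMg -/(ee a z i1 j1) -E1 -conjgM ee10.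
  change (a ^ (t ^+ 2) = a); by rewrite conjgE (cH _ _ aH t2H) mulKg.
have := brute1 l1 m1 l2 m2 (ee_neq oa oz h1) (ee_eqb oa oz nz h2) (ee_neq oa oz h3)
   (ee_neq oa oz h4) (ee_neq oa oz h5) (ee_eqb oa oz nz h6).
case/and4P => /orP[] /eqP ei1 /eqP ej1 /eqP ei2 /eqP ej2; move: E1 E2;
  rewrite ei1 ej1 ei2 ej2 => E1 E2.
  exists a; split=> //; split; first by rewrite E1 ee10.
  by rewrite E2.
have oA : #[a * z] = 4%N.
  apply: order4; rewrite -ee11 eeX //.
    by rewrite eemod // ee00.
  by rewrite -(ee00 a z); apply/eqP => /(ee_eq oa oz nz)[].
have nzA : z \notin <[a * z]>.
  apply/cycleP => -[k ek]; rewrite -ee11 eeX // !mul1n in ek.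
  case: (ee_eq oa oz nz (etrans (ee01 a z) ek)) => e1 e2.
  by move: (modn_dvdm k (isT : (2 %| 4)%N)); rewrite -e1 -e2.
have cA : commute (a * z) z.
  by apply: commute_sym; apply: commuteM => //; apply: commute_sym.
have HA : <[a * z]> * <[z]> = <[a]> * <[z]>.
  apply/eqP; rewrite eqEcard !cardH // leqnn andbT.
  set J := (<[a]> <*> <[z]>)%G; have JE : (J : {set gT}) = <[a]> * <[z]> := joinE c.
  by rewrite -JE mul_subG // cycle_subG JE // ?zH // mem_mulg ?cycle_id.
exists (a * z); split => //; split.
  by rewrite conjMg E1 E2 eeM // -ee11 eemod.
by rewrite E2 -ee11 eeX // /ee !mul1n z1 mulg1 expg1.
Qed.


Lemma lpermE n s i : lperm_ok n s -> lperm n s i = inord (nth 0 s i).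
Proof. by rewrite permE /lperm_fun => ->. Qed.
Ltac peq := rewrite ?expgS ?expg0 ?mulg1 ?mul1g; apply/permP => -[[|[|[|[|[|[|[|[|?]]]]]]]] ?];
  rewrite ?permM ?perm1 ?lpermE //; apply/val_inj => //=; rewrite ?inordK //.
Ltac pneq k := rewrite ?expgS ?expg0 ?mulg1 ?mul1g; apply/eqP => /permP /(_ (inord k)) /(congr1 val); rewrite ?permM ?perm1 ?lpermE //= ?inordK //.

Lemma Na4 : N16_a ^+ 4 = 1. Proof. peq. Qed.
Lemma Na2 : N16_a ^+ 2 != 1. Proof. pneq 0%N. Qed.
Lemma oNa : #[N16_a] = 4%N. Proof. exact: order4 Na4 Na2. Qed.
Lemma oNb : #[N16_b] = 2%N. Proof. by apply: nt_prime_order => //; [peq | pneq 4%N]. Qed.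
Lemma oNc : #[N16_c] = 2%N. Proof. by apply: nt_prime_order => //; [peq | pneq 0%N]. Qed.
Lemma Nab : commute N16_a N16_b. Proof. rewrite /commute; peq. Qed.
Lemma Nac : commute N16_a N16_c. Proof. rewrite /commute; peq. Qed.
Lemma Nbc : N16_b * N16_c = N16_c * (N16_a ^+ 2 * N16_b). Proof. peq. Qed.
Lemma NaJc : N16_a ^ N16_c = N16_a.
Proof. by rewrite conjgE Nac mulKg. Qed.
Lemma NbJc : N16_b ^ N16_c = N16_a ^+ 2 * N16_b.
Proof. by rewrite conjgE Nbc mulKg. Qed.

Lemma Nb_notin : N16_b \notin <[N16_a]>.
Proof.
apply/cycleP => -[i]; rewrite -(expg_mod_order N16_a i) oNa.
have : (i %% 4 < 4)%N by rewrite ltn_pmod.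
case: (i %% 4)%N => [|[|[|[|//]]]] _; apply/eqP; [pneq 4%N | pneq 0%N | pneq 0%N | pneq 0%N].
Qed.

Lemma Nc_notin : N16_c \notin <[N16_a]> * <[N16_b]>.
Proof.
apply/mulsgP => -[x y /cycleP[i ->] /cycleP[j ->]].
rewrite -(expg_mod_order N16_a i) oNa -(expg_mod_order N16_b j) oNb.
have : (i %% 4 < 4)%N by rewrite ltn_pmod.
have : (j %% 2 < 2)%N by rewrite ltn_pmod.
case: (j %% 2)%N => [|[|//]] _; case: (i %% 4)%N => [|[|[|[|//]]]] _; apply/eqP; pneq 0%N.
Qed.


Lemma centAz (gT : finGroupType) (a z : gT) : commute a z -> <[z]> \subset 'C(<[a]>).
Proof. by move=> c; rewrite cycle_subG; apply/centP => _ /cycleP[k ->]; apply: commuteX; exact: commute_sym. Qed.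

Lemma pauli (gT : finGroupType) (Ge : {group gT}) (A z T : gT) :
  #|Ge| = 16%N -> #[A] = 4%N -> #[z] = 2%N -> commute A z -> z \notin <[A]> ->
  A \in Ge -> z \in Ge -> T \in Ge ->
  T \notin <[A]> * <[z]> -> T ^+ 2 = 1 -> A ^ T = A -> z ^ T = A ^+ 2 * z ->
  Ge \isog N16.
Proof.
move=> oG oA oz c nz AG zG TG nTJ T2 AT zT.
set J := (<[A]> <*> <[z]>)%G; have JE : (J : {set gT}) = <[A]> * <[z]> := joinE c.
have oJ : #|J| = 8%N by rewrite JE cardH.
have JG : J \subset Ge by rewrite join_subG !cycle_subG AG.
have iJ : #|Ge : J| = 2%N by rewrite -divgS // oG oJ.
have nJ : J <| Ge by apply: index2_normal.
have oT : #[T] = 2%N.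
  apply: nt_prime_order => //; apply: contraNneq nTJ => ->; by rewrite -JE group1.
have defJ : <[A]> \x <[z]> = J by rewrite dprodE ?TIaz ?centAz // JE.
have dA : (#[N16_a] %| #[A])%N by rewrite oA oNa.
have dZ : (#[N16_b] %| #[z])%N by rewrite oz oNb.
have dT : (#[N16_c] %| #[T])%N by rewrite oT oNc.
pose fA := eltm_morphism dA; pose fZ := eltm_morphism dZ; pose fT := eltm_morphism dT.
have cf : fZ @* <[z]> \subset 'C(fA @* <[A]>) by rewrite !im_eltm; exact: centAz Nab.
pose fH := dprodm_morphism defJ cf.
have fHA : fH A = N16_a by rewrite [fH A](dprodmEl _ _ (cycle_id A)); exact: eltm_id.
have fHz : fH z = N16_b by rewrite [fH z](dprodmEr _ _ (cycle_id z)); exact: eltm_id.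
have AJ : A \in J by rewrite JE; have := mem_mulg (cycle_id A) (group1 <[z]>); rewrite mulg1.
have zJ : z \in J by rewrite JE; have := mem_mulg (group1 <[A]>) (cycle_id z); rewrite mul1g.
have injH : 'injm fH.
  rewrite injm_dprodm !injm_eltm oA oNa oz oNb !im_eltm /= TIaz ?oNb ?Nb_notin //.
have imH : fH @* J = <[N16_a]> * <[N16_b]> by rewrite im_dprodm !im_eltm.
have defG : J ><| <[T]> = Ge.
  rewrite sdprodE ?(subset_trans _ (normal_norm nJ)) ?cycle_subG //; last first.
    by rewrite setIC prime_TIg -?orderE ?oT // cycle_subG JE.
  apply/eqP; rewrite eqEcard mul_subG ?cycle_subG // oG TI_cardMg ?oJ -?orderE ?oT //.
  by rewrite setIC prime_TIg -?orderE ?oT // cycle_subG JE.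
have actf : {in J & <[T]>, morph_act 'J 'J fH fT}.
  move=> x y xJ yT; have : y \in [set 1; T] by rewrite -cycle2g.
  case/set2P => ->; rewrite /=; first by rewrite (conjg1 x) morph1 (conjg1 (fH x)).
  rewrite /fT eltm_id /=.
  move: xJ; rewrite JE => /(ee_mem oA oz)[i [j [_ _ ->]]].
  have A2zJ : A ^+ 2 * z \in J by rewrite groupM ?groupX.
  rewrite /ee conjMg !conjXg AT zT morphM ?groupX // !morphX // morphM ?groupX // morphX //.
  rewrite morphM ?groupX // !morphX // fHA fHz.
  by rewrite conjMg !conjXg NaJc NbJc.
pose f := sdprodm_morphism defG actf.
apply/isogP; exists f.
  rewrite injm_sdprodm injH injm_eltm oT oNc imH im_eltm (cycle2g oNc) /=.
  apply/eqP/setP => x; rewrite !inE; apply/andP/eqP => [[xab /orP[/eqP -> //|/eqP ex]]|->].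
    by move: Nc_notin; rewrite -ex xab.
  by rewrite eqxx; split => //; rewrite -(mulg1 1) mem_mulg ?group1.
apply/eqP; rewrite eqEsubset; apply/andP; split.
  rewrite [f @* Ge]im_sdprodm imH im_eltm.
  by rewrite !mul_subG // cycle_subG mem_gen // !inE eqxx ?orbT.
rewrite gen_subG; apply/subsetP => x; rewrite !inE -!orbA.
case/or3P => /eqP ->.
- by rewrite -fHA -(sdprodmEl defG actf AJ) mem_morphim // (subsetP JG).
- by rewrite -fHz -(sdprodmEl defG actf zJ) mem_morphim // (subsetP JG).
- by rewrite -(eltm_id dT) -(sdprodmEr defG actf (cycle_id T)) mem_morphim.
Qed.


Lemma conj_comm (gT : finGroupType) (x y : gT) : commute x y -> x ^ y = x.
Proof. by move=> c; rewrite conjgE c mulKg. Qed.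

Lemma div16 n : (n %| 16 -> 8 < n -> n = 16)%N.
Proof. by move=> d; have := dvdn_leq (isT : (0 < 16)%N) d; do 17?[case: n d => [|n] d //]. Qed.

Lemma m16 (gT : finGroupType) (Ge : {group gT}) (A z t : gT) i :
  #|Ge| = 16%N -> #[A] = 4%N -> #[z] = 2%N -> commute A z -> z \notin <[A]> ->
  A \in Ge -> z \in Ge -> t \in Ge ->
  t \notin <[A]> * <[z]> -> t ^+ 2 = A ^+ i -> ((i == 1) || (i == 3))%N -> z ^ t = A ^+ 2 * z ->
  Ge \isog Grp (u : v : (u ^+ 8, v ^+ 2, u ^ v = u ^+ 5)).
Proof.
move=> oG oA oz c nz AG zG tG ntJ t2 odd_i zt.
have A4 : A ^+ 4 = 1 by rewrite -oA expg_order.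
have z2 : z ^+ 2 = 1 by rewrite -oz expg_order.
have Ai2 : A ^+ i ^+ 2 = A ^+ 2.
  by case/orP: odd_i => /eqP ->; rewrite -expgnA //= -(expg_mod_order A 6) oA.
have h8 : t ^+ 8 = 1 by rewrite -[8%N]/(2 * 4)%N expgnA t2 -expgnA mulnC expgnA A4 expg1n.
have zi : z^-1 = z by apply/eqP; rewrite eq_invg_mul; apply/eqP.
have h5 : t ^ z = t ^+ 5.
  rewrite conjgE zi mulgA (conjgC z t) zt -!mulgA -[z * z]/(z ^+ 2) z2 mulg1.
  by rewrite expgS -[4%N]/(2 * 2)%N expgnA t2 Ai2.
set J := (<[A]> <*> <[z]>)%G; have JE : (J : {set gT}) = <[A]> * <[z]> := joinE c.
set L := (<[t]> <*> <[z]>)%G.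
have LG : L \subset Ge by rewrite join_subG !cycle_subG tG.
have AL : A \in L.
  case/orP: odd_i => /eqP ei; move: t2; rewrite ei => t2.
    by rewrite -[A]expg1 -t2 groupX // mem_gen // inE cycle_id.
  have -> : A = (t ^+ 2) ^+ 3 by rewrite t2 -expgnA /= -(expg_mod_order A 9) oA.
  by rewrite groupX // groupX // mem_gen // inE cycle_id.
have zL : z \in L by rewrite mem_gen // inE cycle_id orbT.
have tL : t \in L by rewrite mem_gen // inE cycle_id.
have JL : J \subset L by rewrite join_subG !cycle_subG AL.
have pJL : J \proper L by rewrite properEneq JL andbT; apply: contraNneq ntJ => eJL; by rewrite -JE eJL.
have oJ : #|J| = 8%N by rewrite JE cardH.
have oL : #|L| = 16%N.
  by apply: div16; [rewrite -oG cardSg | rewrite -oJ proper_card].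
have defL : L = Ge :> {set gT} by apply/eqP; rewrite eqEcard LG oG oL.
apply: (isoGrp_trans _ (Grp_modular_group (isT : prime 2) (isT : 2 < 4)%N)).
apply/(isoGrpP _ (Grp_modular_group (isT : prime 2) (isT : 2 < 4)%N)).
rewrite card_modular_group //; split => //.
apply/existsP; exists (t, z); rewrite /= !xpair_eqE.
by rewrite -defL h8 z2 h5 !eqxx.
Qed.

Lemma brute2 (i j : nat) : (i < 4 -> j < 2 ->
  ((i + 2 * j) %% 4 == i %% 4) && ((0 + 1 * j) %% 2 == j %% 2) -> j == 0)%N.
Proof. by case: i => [|[|[|[|i]]]] //; case: j => [|[|j]]. Qed.

Lemma final (gT : finGroupType) (Ge : {group gT}) (A z t : gT) :
  #|Ge| = 16%N -> #[A] = 4%N -> #[z] = 2%N -> commute A z -> z \notin <[A]> ->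
  A \in Ge -> z \in Ge -> t \in Ge ->
  t \notin <[A]> * <[z]> -> t ^+ 2 \in <[A]> * <[z]> -> A ^ t = A -> z ^ t = A ^+ 2 * z ->
  (Ge \isog Grp (u : v : (u ^+ 8, v ^+ 2, u ^ v = u ^+ 5))) \/ Ge \isog N16.
Proof.
move=> oG oA oz c nz AG zG tG ntJ t2J At zt.
have [i [j [li lj E]]] := ee_mem oA oz t2J.
have fix2 : (t ^+ 2) ^ t = t ^+ 2 by rewrite conjgE -expgSr expgS mulKg.
have h : ee A z (i + 2 * j) (0 + 1 * j) = ee A z i j.
  rewrite -eeM // -eeX // -E -fix2 E /ee conjMg !conjXg At zt.
  by rewrite expg0 mulg1 expg1.
have /eqP ej := brute2 li lj (ee_eqb oA oz nz h).
move: E; rewrite ej /ee expg0 mulg1 => E.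
have A4 : A ^+ 4 = 1 by rewrite -oA expg_order.
have z2 : z ^+ 2 = 1 by rewrite -oz expg_order.
have [oddi|eveni] := boolP ((i == 1) || (i == 3))%N.
  by left; apply: (m16 oG oA oz c nz AG zG tG ntJ E _ zt); rewrite oddi.
right.
have JE : (<[A]> <*> <[z]>)%G = <[A]> * <[z]> :> {set gT} := joinE c.
have zJ : z \in <[A]> * <[z]> by have := mem_mulg (group1 <[A]>) (cycle_id z); rewrite mul1g.
clear h; move: eveni li E; case: i => [|[|[|[|//]]]] //= _ _ E.
  by apply: (pauli oG oA oz c nz AG zG tG ntJ E At zt).
apply: (pauli (T := t * z) oG oA oz c nz AG zG).
- by rewrite groupM.
- apply: contra ntJ => tzJ; rewrite -JE -(mulgK z t) groupM ?groupV // JE //.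
- rewrite -[(t * z) ^+ 2]/(t * z * (t * z)) mulgA -(mulgA t z t) (conjgC z t) zt.
  rewrite !mulgA -[t * t]/(t ^+ 2) E -!mulgA -[z * z]/(z ^+ 2) z2 mulg1.
  exact: A4.
- by rewrite conjgM At conj_comm.
- rewrite conjgM zt conjMg (conj_comm (commute_refl z)) conj_comm //.
  by apply/commute_sym/commuteX/commute_sym.
Qed.


Lemma Fa5 : frob_a ^+ 5 = 1. Proof. peq. Qed.
Lemma Fa1 : frob_a != 1. Proof. pneq 0%N. Qed.
Lemma Fb4 : frob_b ^+ 4 = 1. Proof. peq. Qed.
Lemma Fb2 : frob_b ^+ 2 != 1. Proof. pneq 1%N. Qed.
Lemma Fab : frob_a * frob_b = frob_b * frob_a ^+ 2. Proof. peq. Qed.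
Lemma oFa : #[frob_a] = 5%N. Proof. exact: nt_prime_order Fa5 Fa1. Qed.
Lemma oFb : #[frob_b] = 4%N. Proof. exact: order4 Fb4 Fb2. Qed.
Lemma FaJb : frob_a ^ frob_b = frob_a ^+ 2. Proof. by rewrite conjgE Fab mulKg. Qed.

Lemma card_Frob : #|Frob20| = 20%N.
Proof.
have nab : <[frob_b]> \subset 'N(<[frob_a]>) by rewrite norms_cycle FaJb mem_cycle.
have -> : (Frob20 : {set _}) = <[frob_a]> * <[frob_b]>.
  rewrite -norm_joinEr //; apply/eqP; rewrite eqEsubset; apply/andP; split.
    by rewrite gen_subG; apply/subsetP => x; rewrite !inE => /orP[] /eqP ->;
      rewrite mem_gen // inE cycle_id ?orbT.
  by rewrite join_subG !cycle_subG !mem_gen // !inE eqxx ?orbT.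
by rewrite TI_cardMg ?coprime_TIg /= -?orderE ?oFa ?oFb.
Qed.

Definition sig2 : 'S_2 := tperm ord0 ord_max.
Lemma sig2_neq1 : sig2 != 1.
Proof. by apply/eqP => /permP /(_ ord0); rewrite /sig2 tpermL perm1. Qed.
Lemma card_C2 : #|C2| = 2%N. Proof. by rewrite /C2 /= cardsT card_Sn. Qed.
Lemma S2comm (x y : 'S_2) : commute x y.
Proof.
have ab : abelian C2 by apply: cyclic_abelian; apply: prime_cyclic; rewrite card_C2.
by have := centsP ab x (in_setT x) y (in_setT y); move=> /commute_sym.
Qed.
Lemma sig2_2 : sig2 ^+ 2 = 1.
Proof. have := @expg_cardG _ C2 sig2 (in_setT sig2); by rewrite card_C2. Qed.

Lemma card_F : #|Frob20xC2| = 40%N.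
Proof. by rewrite /Frob20xC2 /= cardsX card_Frob card_C2. Qed.

Definition fxb : ('S_5 * 'S_2)%type := (frob_b, 1).
Definition fxs : ('S_5 * 'S_2)%type := (1, sig2).

Lemma pairX (g1 g2 : finGroupType) (x : g1) (y : g2) n : ((x, y) : (g1 * g2)%type) ^+ n = (x ^+ n, y ^+ n).
Proof. by elim: n => // n IH; rewrite !expgS IH. Qed.

Lemma ofxb : #[fxb] = 4%N.
Proof.
apply: order4; rewrite /fxb pairX ?Fb4 ?expg1n //.
by apply/eqP => -[]; apply/eqP; exact: Fb2.
Qed.
Lemma ofxs : #[fxs] = 2%N.
Proof.
apply: nt_prime_order => //; first by rewrite /fxs pairX sig2_2 expg1n.
by apply/eqP => -[]; apply/eqP; exact: sig2_neq1.
Qed.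
Lemma fxbF : fxb \in Frob20xC2.
Proof. by rewrite /Frob20xC2 /= in_setX mem_gen ?inE ?eqxx ?orbT // /C2 /= in_setT. Qed.
Lemma fxsF : fxs \in Frob20xC2.
Proof. by rewrite /Frob20xC2 /= in_setX group1 /C2 /= in_setT. Qed.
Lemma fxs_central x : x \in Frob20xC2 -> commute x fxs.
Proof.
case: x => x1 x2 _; rewrite /commute /fxs.
by congr pair; [rewrite mulg1 mul1g | exact: S2comm].
Qed.
Lemma fxs_notin : fxs \notin <[fxb]>.
Proof.
apply/cycleP => -[k]; rewrite /fxb /fxs pairX expg1n => -[_] E.
by move: sig2_neq1; rewrite E eqxx.
Qed.


Unset Implicit Arguments.

Theorem lemma4p2 (gT : finGroupType) (Gx Ge Gxy : {group gT}) :
  amalgam52 Gx Ge Gxy ->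
  primitive_amalgam Gx Ge Gxy ->
  edge_kernel Gx Ge Gxy = 1 ->
  Gx \isog Frob20xC2 ->
  (Ge \isog Grp (u : v : (u ^+ 8, v ^+ 2, u ^ v = u ^+ 5))) \/ Ge \isog N16.
Proof.
case=> sxyx sxye _ ix ie _ ek; rewrite isog_sym => /isogP[f injf imf].
have oGx : #|Gx| = 40%N by rewrite -imf card_injm // card_F.
have oGxy : #|Gxy| = 8%N.
  have := Lagrange sxyx; rewrite ix oGx => h.
  by apply/eqP; rewrite -(eqn_pmul2r (isT : (0 < 5)%N)) h.
have oGe : #|Ge| = 16%N by rewrite -(Lagrange sxye) oGxy ie.
set b1 := f fxb; set s1 := f fxs.
have b1x : b1 \in Gx by rewrite -imf mem_morphim // fxbF.
have s1x : s1 \in Gx by rewrite -imf mem_morphim // fxsF.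
have ob1 : #[b1] = 4%N by rewrite order_injm ?fxbF // ofxb.
have os1 : #[s1] = 2%N by rewrite order_injm ?fxsF // ofxs.
have cs1 y : y \in Gx -> commute y s1.
  rewrite -imf => /morphimP[x xF _ ->].
  by rewrite /commute /s1 -!morphM ?fxsF // fxs_central.
have ns1 : s1 \notin <[b1]>.
  rewrite /b1 -morphim_cycle ?fxbF //; apply/negP => /morphimP[x xF xb E].
  by move: fxs_notin; rewrite (injmP injf _ _ fxsF xF E) xb.
set P1 := (<[b1]> <*> <[s1]>)%G.
have cb1s1 : commute b1 s1 by apply: cs1.
have P1E : (P1 : {set gT}) = <[b1]> * <[s1]> := joinE cb1s1.
have oP1 : #|P1| = 8%N by rewrite P1E cardH.
have P1x : P1 \subset Gx by rewrite join_subG !cycle_subG b1x s1x.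
have sylP1 : 2.-Sylow(Gx) P1 by apply/pHallP; rewrite oP1 oGx p_part; split => //; vm_compute.
have sylXY : 2.-Sylow(Gx) Gxy by apply/pHallP; rewrite oGxy oGx p_part; split => //; vm_compute.
have [g gx defXY] := Sylow_trans sylP1 sylXY.
set a := b1 ^ g; set z := s1.
have zg : z ^ g = z by apply: conj_comm; apply: commute_sym; apply: cs1.
have oa : #[a] = 4%N by rewrite orderJ.
have oz : #[z] = 2%N by [].
have az : commute a z by apply: cs1; rewrite groupJ.
have nz : z \notin <[a]> by rewrite /a cycleJ -zg memJ_conjg.
have aXY : a \in Gxy by rewrite defXY memJ_conjg P1E; have := mem_mulg (cycle_id b1) (group1 <[s1]>); rewrite mulg1.
have zXY : z \in Gxy by rewrite defXY -zg memJ_conjg P1E; have := mem_mulg (group1 <[b1]>) (cycle_id s1); rewrite mul1g.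
have XYE : (Gxy : {set gT}) = <[a]> * <[z]>.
  apply/eqP; rewrite eq_sym eqEcard cardH // oGxy leqnn andbT.
  by rewrite mul_subG // cycle_subG.
have zcore : z \in vertex_kernel Gx Gxy.
  apply: (subsetP (@gcore_max _ Gxy <[z]> Gx _ _) _ (cycle_id z)); first by rewrite cycle_subG.
  apply: cents_norm; apply/centsP => y yx w /cycleP[k ->]; apply: commuteX; exact: cs1.
have nXY : Gxy <| Ge by apply: index2_normal.
have [x0 x0D] : exists x, x \in Ge :\: Gxy.
  apply/set0Pn; apply: contraTneq (isT : (8 < 16)%N) => /eqP.
  rewrite setD_eq0 => sub; rewrite -oGe -oGxy -leqNgt subset_leq_card //.
set t := repr (Ge :\: Gxy).
have tD : t \in Ge :\: Gxy by apply: mem_repr x0D.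
have tGe : t \in Ge by case/setDP: tD.
have ntXY : t \notin Gxy by case/setDP: tD.
have zt : z ^ t != z.
  apply/eqP => zt; have : z \in edge_kernel Gx Ge Gxy.
    by rewrite /edge_kernel inE zcore -/t -{1}zt memJ_conjg zcore.
  by rewrite ek inE -order_eq1 oz.
have Ht x : x \in <[a]> * <[z]> -> x ^ t \in <[a]> * <[z]>.
  by rewrite -XYE => xXY; rewrite memJ_norm // (subsetP (normal_norm nXY)).
have t2 : t ^+ 2 \in <[a]> * <[z]>.
  rewrite -XYE; apply: contraR ntXY => nt2.
  have : t ^+ 2 \in Gxy :* t by rewrite (rcoset_index2 sxye ie tD) inE nt2 groupX.
  case/rcosetP => h hXY; rewrite expgS expg1 => /(mulIg t) ->; exact: hXY.
have [A [oA cAz nzA HA [At ztA]]] := reduce oa oz az nz Ht t2 zt.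
have AGe : A \in Ge.
  apply: (subsetP sxye); rewrite XYE -HA.
  by have := mem_mulg (cycle_id A) (group1 <[z]>); rewrite mulg1.
apply: (final oGe oA oz cAz nzA AGe (subsetP sxye _ zXY) tGe) => //; rewrite ?HA // -XYE //.
Qed.
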